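(* Let $X$ be a set, $E$ an equivalence relation on $X$, and $\tau_0\subseteq\tau_1\subseteq\cdots$ quasi-Polish topologies on $X$ such that for each $i$ the $E$-saturation of every $\tau_i$-open set is $\tau_i$-open. Let $\tau$ be the topology generated by $\bigcup_i\tau_i$. Then the map $h:(X,\tau)/\!/E\to\varprojlim_i(X,\tau_i)/\!/E$, $[x]_{\approx_E^\tau}\mapsto([x]_{\approx_E^{\tau_i}})_i$, is a homeomorphism.
   Context: For a topology $\sigma$ on $X$, $x\approx_E^\sigma y$ iff the $\sigma$-closures of $[x]_E$ and $[y]_E$ coincide, and $(X,\sigma)/\!/E:=X/{\approx_E^\sigma}$ with the quotient topology. For $i$, the maps $(X,\tau_{i+1})/\!/E\to(X,\tau_i)/\!/E$, $[x]_{\approx^{\tau_{i+1}}_E}\mapsto[x]_{\approx^{\tau_i}_E}$, form an inverse sequence; $\varprojlim_i(X,\tau_i)/\!/E$ is the set of compatible sequences in $\prod_i(X,\tau_i)/\!/E$ with the subspace of the product topology. ($\tau$ is quasi-Polish and also has the saturation property.) A quasi-Polish space is a space homeomorphic to a $\mathbf\Pi^0_2$ subset of $\mathbb S^{\mathbb N}$ with $\mathbb S$ the Sierpiński space. *)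

(* Defs.v *)
Definition setT (T : Type) := T -> Prop.

Definition is_topology (T : Type) (O : setT T -> Prop) : Prop :=
  O (fun _ => True) /\
  (forall F : setT T -> Prop, (forall U, F U -> O U) ->
     O (fun x => exists U, F U /\ U x)) /\
  (forall U V, O U -> O V -> O (fun x => U x /\ V x)).

Definition generated (T : Type) (G : setT T -> Prop) : setT T -> Prop :=
  fun A => forall O : setT T -> Prop, is_topology T O -> (forall B, G B -> O B) -> O A.

(* Sierpinski space S = bool with opens {}, {true}, bool; S^N = nat -> bool with the
   product topology, generated by the subbasic opens {f | f n = true}. *)
Definition SN_open : setT (nat -> bool) -> Prop :=
  generated (nat -> bool) (fun B => exists n, B = (fun f => f n = true)).

(* Pi^0_2 subsets of S^N (de Brecht): countable intersections of sets
   {x | x in U_n -> x in V_n}, U_n, V_n open. *)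
Definition Pi02_SN (P : setT (nat -> bool)) : Prop :=
  exists U V : nat -> setT (nat -> bool),
    (forall n, SN_open (U n)) /\ (forall n, SN_open (V n)) /\
    (forall x, P x <-> (forall n, U n x -> V n x)).

Definition quasi_polish (X : Type) (O : setT X -> Prop) : Prop :=
  exists (P : setT (nat -> bool)) (f : X -> (nat -> bool)),
    Pi02_SN P /\
    (forall x y, f x = f y -> x = y) /\
    (forall z, P z <-> exists x, f x = z) /\
    (forall A : setT X, O A <-> exists W, SN_open W /\ (forall x, A x <-> W (f x))).

Definition closure (X : Type) (O : setT X -> Prop) (A : setT X) : setT X :=
  fun z => forall U, O U -> U z -> exists w, U w /\ A w.

Section Quot.
Variables (X : Type) (E : X -> X -> Prop).

Definition Eclass (x : X) : setT X := fun y => E x y.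

Definition saturation (A : setT X) : setT X := fun x => exists y, E x y /\ A y.

Definition approx (O : setT X -> Prop) (x y : X) : Prop :=
  forall z, closure X O (Eclass x) z <-> closure X O (Eclass y) z.

Definition cls (O : setT X -> Prop) (x : X) : setT X := approx O x.

Definition Quot (O : setT X -> Prop) : Type := {C : setT X | exists x, C = cls O x}.

Definition mkQ (O : setT X -> Prop) (x : X) : Quot O :=
  exist _ (cls O x) (ex_intro _ x eq_refl).

Definition Quot_open (O : setT X -> Prop) : setT (Quot O) -> Prop :=
  fun U => O (fun x => U (mkQ O x)).

(* the inverse limit: compatible sequences for the maps [x]_{i+1} |-> [x]_i *)
Definition compatible (tau : nat -> setT X -> Prop) (c : forall i, Quot (tau i)) : Prop :=
  forall i, exists x, proj1_sig (c (S i)) = cls (tau (S i)) x /\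
                      proj1_sig (c i) = cls (tau i) x.

Definition Lim (tau : nat -> setT X -> Prop) : Type :=
  {c : forall i, Quot (tau i) | compatible tau c}.

(* subspace topology of the product topology: generated by the restrictions of the
   subbasic opens {c | c i in U}, U open in (X,tau_i)//E *)
Definition Lim_open (tau : nat -> setT X -> Prop) : setT (Lim tau) -> Prop :=
  generated (Lim tau) (fun B => exists i (U : setT (Quot (tau i))),
                Quot_open (tau i) U /\ B = (fun c => U (proj1_sig c i))).

Definition limpt (tau : nat -> setT X -> Prop) (x : X) : Lim tau :=
  exist _ (fun i => mkQ (tau i) x) (fun i => ex_intro _ x (conj eq_refl eq_refl)).

End Quot.

Definition homeomorphism (T1 T2 : Type) (O1 : setT T1 -> Prop) (O2 : setT T2 -> Prop)
  (h : T1 -> T2) : Prop :=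
  (forall a b, h a = h b -> a = b) /\
  (forall b, exists a, h a = b) /\
  (forall V, O2 V -> O1 (fun a => V (h a))) /\
  (forall U, O1 U -> O2 (fun b => exists a, U a /\ h a = b)).

(* Main.v *)
Require Import Defs.
From Stdlib Require Import Arith Lia ClassicalEpsilon FunctionalExtensionality PropExtensionality ProofIrrelevance Classical.

Lemma set_ext {T} (A B : setT T) : (forall x, A x <-> B x) -> A = B.
Proof. intros H; apply functional_extensionality; intro x; apply propositional_extensionality; apply H. Qed.

Lemma open_ext {T} (O : setT T -> Prop) A B : O A -> (forall x, A x <-> B x) -> O B.
Proof. intros HA H; rewrite <- (set_ext A B H); exact HA. Qed.

Lemma top_T T O : is_topology T O -> O (fun _ => True).
Proof. intros [H _]; exact H. Qed.
Lemma top_U T O (F : setT T -> Prop) : is_topology T O -> (forall U, F U -> O U) -> O (fun x => exists U, F U /\ U x).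
Proof. intros [_ [H _]]; apply H. Qed.
Lemma top_I T O (U V : setT T) : is_topology T O -> O U -> O V -> O (fun x => U x /\ V x).
Proof. intros [_ [_ H]]; apply H. Qed.

Lemma gen_top T G : is_topology T (generated T G).
Proof.
  split; [|split].
  - intros O HO HG; apply (top_T _ _ HO).
  - intros F HF O HO HG. apply (top_U _ _ _ HO). intros U HU. apply (HF U HU O HO HG).
  - intros U V HU HV O HO HG. apply (top_I _ _ _ _ HO); [apply HU|apply HV]; auto.
Qed.

Lemma gen_sub T (G : setT T -> Prop) B : G B -> generated T G B.
Proof. intros HB O HO HG; auto. Qed.

Lemma open_local T O (A : setT T) : is_topology T O ->
  (forall x, A x -> exists U, O U /\ U x /\ forall y, U y -> A y) -> O A.
Proof.
  intros HT H.
  apply (open_ext O (fun x => exists U, (O U /\ forall y, U y -> A y) /\ U x)).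
  - apply (top_U _ _ _ HT); tauto.
  - intro x; split.
    + intros [U [[_ HU] Ux]]; auto.
    + intros Ax; destruct (H x Ax) as [U [? [? ?]]]; exists U; tauto.
Qed.

Definition Bset (c : nat) : setT (nat -> bool) :=
  fun w => forall n, Nat.testbit c n = true -> w n = true.

Lemma testbit_lt a n : Nat.testbit a n = true -> n < a.
Proof.
  intros H. destruct (Nat.eq_dec a 0).
  - subst; rewrite Nat.bits_0 in H; discriminate.
  - destruct (lt_dec n a); auto. exfalso.
    pose proof (Nat.log2_lt_lin a ltac:(lia)).
    rewrite Nat.bits_above_log2 in H; [discriminate|lia].
Qed.

Lemma SN_top : is_topology _ SN_open.
Proof. apply gen_top. Qed.

Lemma sub_open n : SN_open (fun f => f n = true).
Proof. apply gen_sub; exists n; reflexivity. Qed.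

Lemma Bset_open c : SN_open (Bset c).
Proof.
  assert (Hm : forall m, SN_open (fun w => forall n, n < m -> Nat.testbit c n = true -> w n = true)).
  { induction m.
    - apply (open_ext _ (fun _ => True)). apply (top_T _ _ SN_top). intros; split; auto; intros; lia.
    - apply (open_ext _ (fun w => (forall n, n < m -> Nat.testbit c n = true -> w n = true) /\ (Nat.testbit c m = true -> w m = true))).
      + apply (top_I _ _ _ _ SN_top); auto. destruct (Nat.testbit c m) eqn:Hb.
        * apply (open_ext _ (fun w => w m = true)); [apply sub_open|]. intros; split; auto.
        * apply (open_ext _ (fun _ => True)); [apply (top_T _ _ SN_top)|]. intros; split; auto; discriminate.
      + intro w; split.
        * intros [H1 H2] n Hn Hb. destruct (Nat.eq_dec n m); [subst; auto| apply H1; auto; lia].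
        * intros H; split; intros; apply H; auto; lia. }
  apply (open_ext _ _ _ (Hm c)). intro w; split; intros H n.
  - intros Hb; apply H; auto; apply testbit_lt; auto.
  - auto.
Qed.

Lemma SN_fin W : SN_open W -> forall z, W z -> exists c, Bset c z /\ forall w, Bset c w -> W w.
Proof.
  intros HW.
  apply (HW (fun W => forall z, W z -> exists c, Bset c z /\ forall w, Bset c w -> W w)).
  - split; [|split].
    + intros z _. exists 0. split; [intros n Hn; rewrite Nat.bits_0 in Hn; discriminate | auto].
    + intros F HF z [U [FU Uz]]. destruct (HF U FU z Uz) as [c [Hc1 Hc2]].
      exists c; split; auto. intros w Hw; exists U; split; auto.
    + intros U V HU HV z [Uz Vz].
      destruct (HU z Uz) as [c1 [A1 B1]]; destruct (HV z Vz) as [c2 [A2 B2]].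
      exists (Nat.lor c1 c2). split.
      * intros n Hn; rewrite Nat.lor_spec in Hn; apply Bool.orb_true_iff in Hn; destruct Hn; auto.
      * intros w Hw; split; [apply B1|apply B2]; intros n Hn; apply Hw; rewrite Nat.lor_spec, Hn;
          auto using Bool.orb_true_r.
  - intros B [n ->] z Hz. exists (2^n). split.
    + intros m Hm. rewrite Nat.pow2_bits_eqb in Hm. apply Nat.eqb_eq in Hm; subst; auto.
    + intros w Hw. apply Hw. rewrite Nat.pow2_bits_true; auto.
Qed.

Lemma mk_eq {T} (P : T -> Prop) a b (pa : P a) (pb : P b) : a = b -> exist P a pa = exist P b pb.
Proof. intros ->; f_equal; apply proof_irrelevance. Qed.

Section Q.
Variables (X : Type) (E : X -> X -> Prop).
Hypothesis E_refl : forall x, E x x.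
Hypothesis E_sym : forall x y, E x y -> E y x.
Hypothesis E_trans : forall x y z, E x y -> E y z -> E x z.

Lemma approx_refl O x : approx X E O x x.
Proof. intros z; tauto. Qed.
Lemma approx_sym O x y : approx X E O x y -> approx X E O y x.
Proof. intros H z; specialize (H z); tauto. Qed.
Lemma approx_trans O x y w : approx X E O x y -> approx X E O y w -> approx X E O x w.
Proof. intros H1 H2 z; specialize (H1 z); specialize (H2 z); tauto. Qed.

Lemma cls_eq O x y : approx X E O x y -> cls X E O x = cls X E O y.
Proof.
  intros H; apply set_ext; intro w; unfold cls; split; intro;
    eauto using approx_trans, approx_sym.
Qed.

Lemma cls_inv O x y : cls X E O x = cls X E O y -> approx X E O x y.
Proof.
  intros H. assert (H' : cls X E O y y) by apply approx_refl.
  rewrite <- H in H'. exact H'.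
Qed.

Lemma E_approx O x y : E x y -> approx X E O x y.
Proof.
  unfold approx, closure, Eclass; intros Hxy z; split; intros H U HU Uz;
    destruct (H U HU Uz) as [w [Uw Hw]]; exists w; split; eauto.
Qed.

Lemma approx_sat O x y B : approx X E O x y -> O (saturation X E B) ->
  saturation X E B x -> saturation X E B y.
Proof.
  intros Hxy HO Hx.
  assert (Hc : closure X O (Eclass X E y) x).
  { apply (proj1 (Hxy x)). intros U HU Ux. exists x; split; auto. unfold Eclass; auto. }
  destruct (Hc _ HO Hx) as [w [[u [Hwu Bu]] Hyw]]. exists u. split; eauto.
Qed.

Lemma R_approx O x y :
  (forall B, O B -> saturation X E B x -> saturation X E B y) ->
  (forall B, O B -> saturation X E B y -> saturation X E B x) -> approx X E O x y.
Proof.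
  intros H1 H2 z; split; intros Hz U HU Uz; destruct (Hz U HU Uz) as [w [Uw Hw]].
  - destruct (H1 U HU (ex_intro _ w (conj Hw Uw))) as [u [? ?]]; exists u; auto.
  - destruct (H2 U HU (ex_intro _ w (conj Hw Uw))) as [u [? ?]]; exists u; auto.
Qed.

Lemma mkQ_eq O x y : approx X E O x y -> mkQ X E O x = mkQ X E O y.
Proof. intros H; unfold mkQ; apply mk_eq; apply cls_eq; auto. Qed.

Lemma mkQ_inv O x y : mkQ X E O x = mkQ X E O y -> approx X E O x y.
Proof. intros H; apply cls_inv; exact (f_equal (@proj1_sig _ _) H). Qed.

Lemma Quot_rep O (q : Quot X E O) : exists x, q = mkQ X E O x.
Proof. destruct q as [C [x Hx]]; exists x; unfold mkQ; apply mk_eq; auto. Qed.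

Lemma limpt_eq tau x (c : Lim X E tau) :
  (forall i, mkQ X E (tau i) x = proj1_sig c i) -> limpt X E tau x = c.
Proof.
  destruct c as [cf cp]; unfold limpt; simpl; intros H; apply mk_eq;
    apply functional_extensionality_dep; auto.
Qed.

End Q.

Section T.
Variables (X : Type) (E : X -> X -> Prop).
Hypothesis E_refl : forall x, E x x.
Hypothesis E_sym : forall x y, E x y -> E y x.
Hypothesis E_trans : forall x y z, E x y -> E y z -> E x z.
Variable tau : nat -> setT X -> Prop.
Hypothesis tau_top : forall i, is_topology X (tau i).
Hypothesis tau_incr : forall i A, tau i A -> tau (S i) A.
Hypothesis tau_sat : forall i A, tau i A -> tau i (saturation X E A).

Definition tinf := generated X (fun A => exists i, tau i A).

Lemma tau_le i j A : i <= j -> tau i A -> tau j A.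
Proof. intros H; induction H; auto. Qed.

Lemma tau_tinf i A : tau i A -> tinf A.
Proof. intros H; apply gen_sub; exists i; auto. Qed.

Lemma tinf_top : is_topology X tinf.
Proof. apply gen_top. Qed.

Lemma tinf_basis A : tinf A -> forall x, A x ->
  exists i B, tau i B /\ B x /\ forall y, B y -> A y.
Proof.
  intros HA.
  apply (HA (fun A => forall x, A x -> exists i B, tau i B /\ B x /\ forall y, B y -> A y)).
  - split;[|split].
    + intros x _. exists 0, (fun _ => True). split; [apply (top_T _ _ (tau_top 0))| auto].
    + intros F HF x [U [FU Ux]]. destruct (HF U FU x Ux) as [i [B [? [? ?]]]].
      exists i, B; split; auto; split; auto; intros y By; exists U; auto.
    + intros U V HU HV x [Ux Vx].
      destruct (HU x Ux) as [i [B [HB [Bx BU]]]]; destruct (HV x Vx) as [j [C [HC [Cx CV]]]].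
      exists (i+j), (fun y => B y /\ C y). split.
      * apply (top_I _ _ _ _ (tau_top _)); [apply (tau_le i)|apply (tau_le j)]; auto; lia.
      * split; auto. intros y [? ?]; split; auto.
  - intros B [i HB] x Bx. exists i, B. auto.
Qed.

Lemma approx_down i j x y : i <= j -> approx X E (tau j) x y -> approx X E (tau i) x y.
Proof.
  intros Hij H. apply R_approx; intros B HB Hs.
  - apply (approx_sat X E E_refl E_sym E_trans (tau j) x y); auto. apply (tau_le i); auto.
  - apply (approx_sat X E E_refl E_sym E_trans (tau j) y x); auto using approx_sym.
    apply (tau_le i); auto.
Qed.

Lemma approx_inf_iff x y : approx X E tinf x y <-> forall i, approx X E (tau i) x y.
Proof.
  split.
  - intros H i. apply R_approx; intros B HB Hs.
    + apply (approx_sat X E E_refl E_sym E_trans tinf x y); auto.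
      apply (tau_tinf i), tau_sat; auto.
    + apply (approx_sat X E E_refl E_sym E_trans tinf y x); auto using approx_sym.
      apply (tau_tinf i), tau_sat; auto.
  - intros H. apply R_approx; intros B HB [u [Eu Bu]];
      destruct (tinf_basis B HB u Bu) as [i [B' [HB' [B'u B'B]]]].
    + assert (Hs : saturation X E B' y).
      { apply (approx_sat X E E_refl E_sym E_trans (tau i) x y); auto. exists u; auto. }
      destruct Hs as [v [Ev B'v]]; exists v; auto.
    + assert (Hs : saturation X E B' x).
      { apply (approx_sat X E E_refl E_sym E_trans (tau i) y x); auto using approx_sym. exists u; auto. }
      destruct Hs as [v [Ev B'v]]; exists v; auto.
Qed.

Section Surj.
Variable f : nat -> X -> nat -> bool.
Hypothesis f_inj : forall i x y, f i x = f i y -> x = y.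
Hypothesis f_open : forall i A, tau i A <-> exists W, SN_open W /\ forall x, A x <-> W (f i x).
Variable P : nat -> setT (nat -> bool).
Hypothesis P_img : forall i z, P i z <-> exists x, f i x = z.
Variables U V : nat -> nat -> setT (nat -> bool).
Hypothesis U_open : forall i n, SN_open (U i n).
Hypothesis V_open : forall i n, SN_open (V i n).
Hypothesis P_char : forall i z, P i z <-> forall n, U i n z -> V i n z.
Variable c : forall i, Quot X E (tau i).
Hypothesis c_comp : compatible X E tau c.

Definition K k : setT X := proj1_sig (c k).

Lemma K_rep k : exists y, forall x, K k x <-> approx X E (tau k) y x.
Proof.
  destruct (proj2_sig (c k)) as [y Hy]; exists y; intros; unfold K; rewrite Hy; reflexivity.
Qed.

Lemma K_ne k : exists x, K k x.
Proof. destruct (K_rep k) as [y Hy]; exists y; apply Hy, approx_refl. Qed.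

Lemma K_step k x : K (S k) x -> K k x.
Proof.
  destruct (c_comp k) as [y [H1 H2]]. unfold K; rewrite H1, H2.
  apply approx_down; auto.
Qed.

Lemma K_le j k x : j <= k -> K k x -> K j x.
Proof. intros H; induction H; auto using K_step. Qed.

Lemma dense k x D : K k x -> D x -> tau k D -> exists x', D x' /\ K (S k) x'.
Proof.
  intros Hx Dx HD.
  destruct (c_comp k) as [y [H1 H2]].
  assert (Hyx: approx X E (tau k) y x) by (unfold K in Hx; rewrite H2 in Hx; exact Hx).
  assert (Hs : saturation X E D y).
  { apply (approx_sat X E E_refl E_sym E_trans (tau k) x y); auto using approx_sym.
    exists x; split; auto. }
  destruct Hs as [u [Eyu Du]]. exists u; split; auto. unfold K; rewrite H1.
  apply E_approx; auto.
Qed.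

Lemma inhX : inhabited X.
Proof. destruct (K_ne 0) as [x _]; constructor; exact x. Qed.

Definition rep j (A : setT X) : setT (nat -> bool) :=
  epsilon (inhabits (fun _ : nat -> bool => True))
    (fun W => SN_open W /\ forall x, A x <-> W (f j x)).

Lemma rep_spec j A : tau j A -> SN_open (rep j A) /\ forall x, A x <-> rep j A (f j x).
Proof. intros H; apply (@epsilon_spec _ _ (fun W => SN_open W /\ forall x, A x <-> W (f j x))); apply f_open; auto. Qed.

Definition cw (W : setT (nat -> bool)) (w : nat -> bool) : nat :=
  epsilon (inhabits 0) (fun c => Bset c w /\ forall w', Bset c w' -> W w').

Lemma cw_spec W w : SN_open W -> W w ->
  Bset (cw W w) w /\ forall w', Bset (cw W w) w' -> W w'.
Proof. intros HW Hw; apply (@epsilon_spec _ _ (fun c => Bset c w /\ forall w', Bset c w' -> W w')); apply SN_fin; auto. Qed.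

Definition reqj (fam a : nat) : nat := match fam with 2 => S a | _ => a end.
Definition reqW (fam a b : nat) : setT (nat -> bool) :=
  match fam with
  | 0 => V a b
  | 1 => fun w => w b = true
  | 2 => rep (S a) (fun x => f a x b = true)
  | _ => rep a (saturation X E (fun x => Bset b (f a x)))
  end.

Lemma fopen_bit i n : tau i (fun x => f i x n = true).
Proof. apply f_open; exists (fun w => w n = true); split; [apply sub_open| tauto]. Qed.

Lemma fopen_B i b : tau i (fun x => Bset b (f i x)).
Proof. apply f_open; exists (Bset b); split; [apply Bset_open| tauto]. Qed.

Lemma reqW_open fam a b : fam <= 3 -> SN_open (reqW fam a b).
Proof.
  destruct fam as [|[|[|[|fam]]]]; intros; simpl; try lia.
  - apply V_open.
  - apply sub_open.
  - apply (rep_spec (S a)). apply tau_incr, fopen_bit.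
  - apply (rep_spec a). apply tau_sat, fopen_B.
Qed.

Definition Ck k (x0 : X) : setT X := fun x => forall fam a b, fam <= 3 -> a <= k -> b <= k ->
  reqj fam a <= k -> reqW fam a b (f (reqj fam a) x0) ->
  Bset (cw (reqW fam a b) (f (reqj fam a) x0)) (f (reqj fam a) x).

Lemma bint k m (A : nat -> setT X) : (forall r, r <= m -> tau k (A r)) ->
  tau k (fun x => forall r, r <= m -> A r x).
Proof.
  induction m; intros H.
  - apply (open_ext _ (A 0)); [apply H; auto|].
    intros x; split; [intros; replace r with 0 by lia; auto| intros H'; apply H'; auto].
  - apply (open_ext _ (fun x => (forall r, r <= m -> A r x) /\ A (S m) x)).
    + apply (top_I _ _ _ _ (tau_top k)); auto.
    + intros x; split.
      * intros [H1 H2] r Hr; destruct (Nat.eq_dec r (S m)); [subst; auto| apply H1; lia].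
      * intros H'; split; auto.
Qed.

Lemma Ck_open k x0 : tau k (Ck k x0).
Proof.
  unfold Ck.
  apply (open_ext _ (fun x => forall fam, fam <= 3 -> forall a, a <= k -> forall b, b <= k ->
    (reqj fam a <= k -> reqW fam a b (f (reqj fam a) x0) ->
     Bset (cw (reqW fam a b) (f (reqj fam a) x0)) (f (reqj fam a) x)))).
  - apply bint; intros fam Hf; apply bint; intros a Ha; apply bint; intros b Hb.
    destruct (classic (reqj fam a <= k /\ reqW fam a b (f (reqj fam a) x0))) as [[H1 H2]|Hn].
    + apply (open_ext _ (fun x => Bset (cw (reqW fam a b) (f (reqj fam a) x0)) (f (reqj fam a) x))).
      * apply (tau_le (reqj fam a)); auto. apply fopen_B.
      * intros; split; auto.
    + apply (open_ext _ (fun _ => True)).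
      * apply (top_T _ _ (tau_top k)).
      * intros; split; auto; intros _ H1 H2; exfalso; auto.
  - intro x; split; intros H; intros; apply H; auto.
Qed.

Lemma Ck_self k x0 : Ck k x0 x0.
Proof. unfold Ck; intros. apply cw_spec; auto; apply reqW_open; auto. Qed.

Definition step k (s : X * setT X) : X * setT X :=
  let D' := fun x => snd s x /\ Ck k (fst s) x in
  (epsilon inhX (fun x' => D' x' /\ K (S k) x'), D').

Fixpoint sq k : X * setT X :=
  match k with
  | 0 => (epsilon inhX (K 0), fun _ => True)
  | S k => step k (sq k)
  end.

Definition xs k := fst (sq k).
Definition Ds k := snd (sq k).

Lemma inv k : K k (xs k) /\ Ds k (xs k) /\ tau k (Ds k).
Proof.
  induction k.
  - unfold xs, Ds; simpl. split; [apply (@epsilon_spec _ _ (K 0)), K_ne | split; auto; apply (top_T _ _ (tau_top 0))].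
  - destruct IHk as [H1 [H2 H3]]. unfold xs, Ds in *; simpl sq; unfold step.
    set (s := sq k) in *. simpl fst; simpl snd.
    assert (HD : tau k (fun x => snd s x /\ Ck k (fst s) x))
      by (apply (top_I _ _ _ _ (tau_top k)); auto; apply Ck_open).
    destruct (dense k (fst s) _ H1 (conj H2 (Ck_self k (fst s))) HD) as [x' Hx'].
    pose proof (@epsilon_spec _ inhX (fun x' => (snd s x' /\ Ck k (fst s) x') /\ K (S k) x')
       (ex_intro _ x' Hx')) as Hsp. cbv beta in Hsp.
    split; [tauto| split; [tauto| apply tau_incr; auto]].
Qed.

Lemma Ds_S k x : Ds (S k) x -> Ds k x /\ Ck k (xs k) x.
Proof. unfold Ds, xs; simpl; unfold step; simpl; auto. Qed.

Lemma Ds_le k k' x : k <= k' -> Ds k' x -> Ds k x.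
Proof. intros H; induction H; auto; intros; apply IHle; apply Ds_S; auto. Qed.

Lemma xs_in k k' : k <= k' -> Ds k (xs k').
Proof. intros H; apply (Ds_le k k'); auto; apply inv. Qed.

Definition z j n : bool :=
  if excluded_middle_informative (exists k, forall x, Ds k x -> f j x n = true) then true else false.

Lemma z_true j n : z j n = true <-> exists k, forall x, Ds k x -> f j x n = true.
Proof. unfold z; destruct excluded_middle_informative; split; auto; intros H; try discriminate; contradiction. Qed.

Lemma L0 j cc : (exists k, forall x, Ds k x -> Bset cc (f j x)) -> Bset cc (z j).
Proof. intros [k H] n Hn; apply z_true; exists k; intros x Hx; apply H; auto. Qed.

Lemma L1 j cc : Bset cc (z j) -> exists k, forall x, Ds k x -> Bset cc (f j x).
Proof.
  intros H.
  assert (Hm : forall m, exists k, forall x, Ds k x -> forall n, n < m -> Nat.testbit cc n = true -> f j x n = true).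
  { induction m. { exists 0; intros; lia. }
    destruct IHm as [k1 Hk1]. destruct (Nat.testbit cc m) eqn:Hb.
    - destruct (proj1 (z_true j m) (H m Hb)) as [k2 Hk2]. exists (max k1 k2).
      intros x Hx n Hn Hbn. destruct (Nat.eq_dec n m).
      + subst; apply Hk2; apply (Ds_le _ (max k1 k2)); auto; lia.
      + apply (Hk1 x); auto; [apply (Ds_le _ (max k1 k2)); auto; lia | lia].
    - exists k1; intros x Hx n Hn Hbn. destruct (Nat.eq_dec n m); [subst; congruence| apply (Hk1 x); auto; lia]. }
  destruct (Hm cc) as [k Hk]; exists k; intros x Hx n Hn; apply (Hk x); auto; apply testbit_lt; auto.
Qed.

Lemma L3 j W : SN_open W -> W (z j) -> exists k0, forall k, k0 <= k -> W (f j (xs k)).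
Proof.
  intros HW Hz. destruct (SN_fin W HW _ Hz) as [cc [H1 H2]].
  destruct (L1 j cc H1) as [k0 Hk0]. exists k0; intros k Hk; apply H2, Hk0, xs_in; auto.
Qed.

Lemma L4 fam a b : fam <= 3 ->
  (exists k0, forall k, k0 <= k -> reqW fam a b (f (reqj fam a) (xs k))) ->
  reqW fam a b (z (reqj fam a)).
Proof.
  intros Hf [k0 Hk0]. pose (k := max k0 (max a (max b (reqj fam a)))).
  assert (Hk1 : k0 <= k) by (unfold k; lia).
  assert (Hk2 : a <= k) by (unfold k; lia).
  assert (Hk3 : b <= k) by (unfold k; lia).
  assert (Hk4 : reqj fam a <= k) by (unfold k; lia).
  assert (Hw := Hk0 k Hk1).
  destruct (cw_spec _ _ (reqW_open fam a b Hf) Hw) as [_ H2]. apply H2. apply L0.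
  exists (S k). intros x Hx. apply Ds_S in Hx. destruct Hx as [_ Hc]. apply Hc; auto.
Qed.

Lemma zP i : P i (z i).
Proof.
  apply P_char; intros n Hu. destruct (L3 i _ (U_open i n) Hu) as [k0 Hk0].
  apply (L4 0 i n); [lia|]. exists k0; intros k Hk. simpl.
  assert (HP : P i (f i (xs k))) by (apply P_img; eauto).
  apply (proj1 (P_char i _) HP); auto.
Qed.

Lemma z_compat i y : f (S i) y = z (S i) -> f i y = z i.
Proof.
  intros Hy. apply functional_extensionality; intro n.
  destruct (rep_spec (S i) (fun x => f i x n = true) (tau_incr _ _ (fopen_bit i n))) as [Ro Rs].
  assert (A1 : f i y n = true -> z i n = true).
  { intros H. apply Rs in H. rewrite Hy in H. destruct (L3 (S i) _ Ro H) as [k0 Hk0].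
    apply (L4 1 i n); [lia|]. exists k0; intros k Hk; simpl. apply Rs. apply Hk0; auto. }
  assert (A2 : z i n = true -> f i y n = true).
  { intros H. destruct (L3 i (fun w => w n = true) (sub_open n) H) as [k0 Hk0].
    apply Rs. rewrite Hy. apply (L4 2 i n); [lia|]. exists k0; intros k Hk; simpl.
    apply Rs, Hk0; auto. }
  destruct (f i y n) eqn:E1; destruct (z i n) eqn:E2; try reflexivity;
    [ pose proof (A1 eq_refl) | pose proof (A2 eq_refl)]; congruence.
Qed.

Lemma exists_point : exists x, forall j, f j x = z j.
Proof.
  destruct (proj1 (P_img 0 _) (zP 0)) as [y0 Hy0]. exists y0. intro j; induction j; auto.
  destruct (proj1 (P_img (S j) _) (zP (S j))) as [y Hy].
  assert (H : f j y = f j y0) by (rewrite IHj; apply z_compat; auto).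
  apply f_inj in H; subst; auto.
Qed.

Lemma surj_main : exists x, forall j, K j x.
Proof.
  destruct exists_point as [x Hx]; exists x; intro j.
  destruct (K_rep j) as [y Hy]. apply Hy.
  assert (Ev : forall B k, tau j (saturation X E B) -> j <= k ->
            (saturation X E B y <-> saturation X E B (xs k))).
  { intros B k HB Hk. assert (Hyk: approx X E (tau j) y (xs k))
      by (apply Hy, (K_le j k); auto; apply inv).
    split; intros; eapply approx_sat; eauto using approx_sym. }
  apply R_approx; intros B HB Hs.
  - destruct Hs as [u [Eyu Bu]]. destruct (proj1 (f_open j B) HB) as [W [HW HWB]].
    destruct (SN_fin W HW (f j u) (proj1 (HWB u) Bu)) as [cc [Hc1 Hc2]].
    destruct (rep_spec j (saturation X E (fun x => Bset cc (f j x))) (tau_sat j _ (fopen_B j cc))) as [Ro Rs].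
    assert (Hrz : rep j (saturation X E (fun x => Bset cc (f j x))) (z j)).
    { apply (L4 3 j cc); [lia|]. exists j; intros k Hk. simpl. apply Rs.
      apply (proj1 (Ev _ k (tau_sat j _ (fopen_B j cc)) Hk)). exists u; split; auto. }
    rewrite <- Hx in Hrz. apply Rs in Hrz. destruct Hrz as [u' [Exu' Bu']].
    exists u'; split; auto. apply HWB; apply Hc2; auto.
  - destruct (proj1 (f_open j _) (tau_sat j B HB)) as [W [HW HWB]].
    apply HWB in Hs. rewrite Hx in Hs. destruct (L3 j W HW Hs) as [k0 Hk0].
    apply (proj2 (Ev B (max k0 j) (tau_sat j B HB) ltac:(lia))).
    apply HWB. apply Hk0; lia.
Qed.

End Surj.
End T.

Theorem lemma2p5 (X : Type) (E : X -> X -> Prop)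
  (E_refl : forall x, E x x)
  (E_sym : forall x y, E x y -> E y x)
  (E_trans : forall x y z, E x y -> E y z -> E x z)
  (tau : nat -> setT X -> Prop)
  (tau_top : forall i, is_topology X (tau i))
  (tau_qp : forall i, quasi_polish X (tau i))
  (tau_incr : forall i A, tau i A -> tau (S i) A)
  (tau_sat : forall i A, tau i A -> tau i (saturation X E A)) :
  let tinf := generated X (fun A => exists i, tau i A) in
  exists h : Quot X E tinf -> Lim X E tau,
    (forall x, h (mkQ X E tinf x) = limpt X E tau x) /\
    homeomorphism _ _ (Quot_open X E tinf) (Lim_open X E tau) h.
Proof.
  intros tinf0. change tinf0 with (tinf X tau).
  assert (Hch : exists (Pf : nat -> setT (nat -> bool)) (f : nat -> X -> nat -> bool), forall i,
    Pi02_SN (Pf i) /\ (forall x y, f i x = f i y -> x = y) /\ (forall z, Pf i z <-> exists x, f i x = z) /\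
    (forall A, tau i A <-> exists W, SN_open W /\ forall x, A x <-> W (f i x))).
  { destruct (choice (fun i (p : setT (nat->bool) * (X -> nat -> bool)) =>
      Pi02_SN (fst p) /\ (forall x y, snd p x = snd p y -> x = y) /\ (forall z, fst p z <-> exists x, snd p x = z) /\
      (forall A, tau i A <-> exists W, SN_open W /\ forall x, A x <-> W (snd p x)))) as [g Hg].
    { intro i; destruct (tau_qp i) as [P0 [f0 H]]; exists (P0, f0); exact H. }
    exists (fun i => fst (g i)), (fun i => snd (g i)); exact Hg. }
  destruct Hch as [Pf [f Hf]].
  assert (Hch2 : exists U V : nat -> nat -> setT (nat->bool), forall i,
     (forall n, SN_open (U i n)) /\ (forall n, SN_open (V i n)) /\ forall z, Pf i z <-> forall n, U i n z -> V i n z).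
  { destruct (choice (fun i (p : (nat -> setT (nat -> bool)) * (nat -> setT (nat -> bool))) =>
      (forall n, SN_open (fst p n)) /\ (forall n, SN_open (snd p n)) /\ forall z, Pf i z <-> forall n, fst p n z -> snd p n z)) as [g Hg].
    { intro i; destruct (Hf i) as [[U0 [V0 H]] _]; exists (U0, V0); exact H. }
    exists (fun i n => fst (g i) n), (fun i n => snd (g i) n); exact Hg. }
  destruct Hch2 as [U [V HUV]].
  assert (hsurj : forall b : Lim X E tau, exists x, limpt X E tau x = b).
  { intros [cf cp].
    destruct (surj_main X E E_refl E_sym E_trans tau tau_top tau_incr tau_sat f
      (fun i => proj1 (proj2 (Hf i))) (fun i => proj2 (proj2 (proj2 (Hf i))))
      Pf (fun i => proj1 (proj2 (proj2 (Hf i)))) U V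
      (fun i => proj1 (HUV i)) (fun i => proj1 (proj2 (HUV i))) (fun i => proj2 (proj2 (HUV i)))
      cf cp) as [x Hx].
    exists x. apply limpt_eq. intro i. simpl.
    destruct (Quot_rep X E (tau i) (cf i)) as [y Hy].
    pose proof (Hx i) as Hi. unfold K in Hi. rewrite Hy in Hi. simpl in Hi.
    rewrite Hy. apply mkQ_eq; auto. apply approx_sym; exact Hi. }
  pose (h := fun q : Quot X E (tinf X tau) =>
     limpt X E tau (proj1_sig (constructive_indefinite_description _ (proj2_sig q)))).
  assert (hmk : forall x, h (mkQ X E (tinf X tau) x) = limpt X E tau x).
  { intros x. unfold h. destruct (constructive_indefinite_description _ _) as [x' Hx'].
    simpl. simpl in Hx'. apply cls_inv in Hx'. apply limpt_eq. intro i. simpl.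
    apply mkQ_eq. apply approx_sym.
    apply (proj1 (approx_inf_iff X E E_refl E_sym E_trans tau tau_top tau_incr tau_sat x x') Hx'). }
  exists h; split; auto.
  split; [|split; [|split]].
  - intros a b Hab. destruct (Quot_rep _ _ _ a) as [x ->]; destruct (Quot_rep _ _ _ b) as [y ->].
    rewrite !hmk in Hab. apply mkQ_eq.
    apply (proj2 (approx_inf_iff X E E_refl E_sym E_trans tau tau_top tau_incr tau_sat x y)).
    intro i. apply mkQ_inv. exact (f_equal (fun c => proj1_sig c i) Hab).
  - intros b. destruct (hsurj b) as [x <-]. exists (mkQ X E (tinf X tau) x). apply hmk.
  - intros W HW. unfold Quot_open.
    apply (open_ext _ (fun x => W (limpt X E tau x))); [| intro x; rewrite hmk; tauto].
    apply (HW (fun W => tinf X tau (fun x => W (limpt X E tau x)))).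
    + split; [|split].
      * apply (top_T _ _ (tinf_top X tau)).
      * intros F HF. apply (open_ext _ (fun x => exists U', (exists W0, F W0 /\ U' = fun y => W0 (limpt X E tau y)) /\ U' x)).
        -- apply (top_U _ _ _ (tinf_top X tau)). intros U' [W0 [FW0 ->]]; auto.
        -- intros x; split.
           ++ intros [U' [[W0 [FW0 ->]] Hx]]; exists W0; auto.
           ++ intros [W0 [FW0 Hx]]; exists (fun y => W0 (limpt X E tau y)); eauto.
      * intros U1 U2 H1 H2. apply (top_I _ _ _ _ (tinf_top X tau)); auto.
    + intros B [i [U0 [HU0 ->]]]. apply (tau_tinf X tau i). exact HU0.
  - intros O HO. apply open_local; [apply gen_top|]. intros b [a [Oa <-]].
    destruct (Quot_rep _ _ _ a) as [x ->].
    destruct (tinf_basis X tau tau_top tau_incr _ HO x Oa) as [i [B [HB [Bx BO]]]].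
    set (Vi := fun q : Quot X E (tau i) => exists x', q = mkQ X E (tau i) x' /\ saturation X E B x').
    exists (fun c => Vi (proj1_sig c i)). split; [|split].
    + apply gen_sub. exists i, Vi. split; auto. unfold Quot_open.
      apply (open_ext _ (saturation X E B)); [apply tau_sat; auto|]. intros y; split.
      * intros Hy; exists y; auto.
      * intros [x' [Hq Hs]]. apply mkQ_inv in Hq.
        apply (approx_sat X E E_refl E_sym E_trans (tau i) x' y); auto using approx_sym.
    + rewrite hmk. simpl. exists x. split; auto. exists x; split; auto.
    + intros c [x' [Hq Hs]]. destruct (hsurj c) as [y <-]. simpl in Hq. apply mkQ_inv in Hq.
      assert (Hsy : saturation X E B y).
      { apply (approx_sat X E E_refl E_sym E_trans (tau i) x' y); auto using approx_sym. }
      destruct Hsy as [u [Eyu Bu]].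
      exists (mkQ X E (tinf X tau) y). split; [|apply hmk].
      rewrite (mkQ_eq X E (tinf X tau) y u (E_approx X E E_sym E_trans _ _ _ Eyu)). auto.
Qed.
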